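(* There is an admissible set $T' \subseteq \{0,1,2\}^{1562}$ such that $|T'| = 142 \cdot 37 \cdot \binom{11}{7}^{141}$ and every $t \in T'$ has weight $990$.
   Context: A set $S\subseteq\{0,1,2\}^m$ is admissible if (1) for all distinct $s,s'\in S$ there are coordinates $i,j$ with $s_i=0\neq s'_i$ and $s_j\neq 0=s'_j$; and (2) for all distinct $s,s',s''\in S$ there is a coordinate $k$ such that the multiset $\{s_k,s'_k,s''_k\}$ equals $\{0,1,2\}$, $\{0,0,1\}$ or $\{0,0,2\}$. The weight of a vector is its number of nonzero coordinates. *)

(* Defs.v *)
From mathcomp Require Import all_boot.
Set Implicit Arguments. Unset Strict Implicit. Unset Printing Implicit Defensive.

Definition vec (m : nat) := {ffun 'I_m -> 'I_3}.

Definition z0 : 'I_3 := @Ordinal 3 0 isT.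
Definition z1 : 'I_3 := @Ordinal 3 1 isT.
Definition z2 : 'I_3 := @Ordinal 3 2 isT.

Definition weight (m : nat) (s : vec m) : nat := #|[set i | s i != z0]|.

Definition cond1 (m : nat) (s s' : vec m) : Prop :=
  (exists i, s i = z0 /\ s' i <> z0) /\ (exists j, s j <> z0 /\ s' j = z0).

Definition good_triple (a b c : 'I_3) : Prop :=
  perm_eq [:: a; b; c] [:: z0; z1; z2] \/
  perm_eq [:: a; b; c] [:: z0; z0; z1] \/
  perm_eq [:: a; b; c] [:: z0; z0; z2].

Definition admissible (m : nat) (S : {set vec m}) : Prop :=
  (forall s s', s \in S -> s' \in S -> s <> s' -> cond1 s s') /\
  (forall s s' s'', s \in S -> s' \in S -> s'' \in S ->
     s <> s' -> s <> s'' -> s' <> s'' ->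
     exists k, good_triple (s k) (s' k) (s'' k)).

(* Main.v *)
Require Import Defs.
From mathcomp Require Import all_boot.
From mathcomp Require Import zify.
Set Implicit Arguments. Unset Strict Implicit. Unset Printing Implicit Defensive.

(* Construction: 142 blocks of 11 coordinates.  A = an admissible set of 330
   weight-7 vectors in {0,1,2}^11 (found by computer search), A' = A with 1<->2
   swapped, B = 37 weight-3 vectors.  T' = union over special block p of
   A^{<p} x B x A'^{>p}. *)
Definition Al : seq (seq nat) :=
 [:: [:: 2; 1; 2; 1; 1; 1; 2; 0; 0; 0; 0];
  [:: 1; 1; 1; 2; 1; 1; 0; 1; 0; 0; 0];
  [:: 2; 1; 2; 2; 1; 0; 1; 1; 0; 0; 0];
  [:: 1; 2; 1; 1; 0; 1; 2; 2; 0; 0; 0];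
  [:: 1; 1; 1; 0; 1; 1; 2; 1; 0; 0; 0];
  [:: 1; 1; 0; 1; 2; 2; 2; 1; 0; 0; 0];
  [:: 1; 0; 1; 2; 2; 2; 1; 1; 0; 0; 0];
  [:: 0; 2; 1; 2; 1; 1; 1; 2; 0; 0; 0];
  [:: 1; 2; 1; 1; 2; 1; 0; 0; 2; 0; 0];
  [:: 1; 1; 2; 1; 2; 0; 2; 0; 1; 0; 0];
  [:: 2; 1; 1; 1; 0; 1; 1; 0; 1; 0; 0];
  [:: 2; 2; 1; 0; 1; 1; 1; 0; 2; 0; 0];
  [:: 2; 1; 0; 2; 1; 2; 1; 0; 1; 0; 0];
  [:: 1; 0; 1; 2; 2; 2; 1; 0; 1; 0; 0];
  [:: 0; 1; 1; 1; 2; 1; 1; 0; 1; 0; 0];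
  [:: 1; 1; 2; 1; 1; 0; 0; 2; 2; 0; 0];
  [:: 1; 1; 2; 2; 0; 1; 0; 2; 1; 0; 0];
  [:: 1; 1; 1; 0; 1; 1; 0; 1; 2; 0; 0];
  [:: 2; 1; 0; 2; 1; 2; 0; 1; 1; 0; 0];
  [:: 2; 0; 1; 1; 1; 2; 0; 1; 2; 0; 0];
  [:: 0; 2; 1; 2; 2; 1; 0; 1; 1; 0; 0];
  [:: 2; 1; 2; 2; 0; 0; 1; 1; 1; 0; 0];
  [:: 1; 1; 2; 0; 2; 0; 2; 1; 1; 0; 0];
  [:: 2; 1; 0; 1; 2; 0; 1; 2; 1; 0; 0];
  [:: 2; 0; 1; 1; 2; 0; 1; 2; 1; 0; 0];
  [:: 0; 1; 2; 1; 1; 0; 1; 2; 2; 0; 0];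
  [:: 1; 1; 1; 0; 0; 2; 1; 2; 2; 0; 0];
  [:: 2; 2; 0; 1; 0; 1; 2; 1; 1; 0; 0];
  [:: 2; 0; 1; 1; 0; 2; 1; 1; 2; 0; 0];
  [:: 0; 1; 1; 1; 0; 1; 1; 2; 1; 0; 0];
  [:: 2; 2; 0; 0; 1; 1; 2; 1; 1; 0; 0];
  [:: 1; 0; 2; 0; 2; 1; 1; 1; 2; 0; 0];
  [:: 0; 1; 1; 0; 1; 2; 2; 2; 1; 0; 0];
  [:: 2; 0; 0; 1; 2; 1; 1; 2; 1; 0; 0];
  [:: 0; 1; 0; 1; 2; 2; 2; 1; 1; 0; 0];
  [:: 0; 0; 2; 1; 2; 1; 1; 1; 2; 0; 0];
  [:: 1; 2; 2; 2; 1; 1; 0; 0; 0; 1; 0];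
  [:: 1; 2; 2; 2; 1; 0; 1; 0; 0; 1; 0];
  [:: 1; 1; 1; 2; 0; 1; 2; 0; 0; 2; 0];
  [:: 1; 1; 2; 0; 1; 2; 1; 0; 0; 2; 0];
  [:: 1; 1; 0; 2; 1; 1; 2; 0; 0; 2; 0];
  [:: 2; 0; 2; 1; 1; 1; 2; 0; 0; 1; 0];
  [:: 0; 1; 2; 1; 1; 2; 1; 0; 0; 2; 0];
  [:: 2; 1; 1; 1; 2; 0; 0; 1; 0; 2; 0];
  [:: 1; 2; 2; 1; 0; 1; 0; 1; 0; 2; 0];
  [:: 1; 1; 1; 0; 1; 1; 0; 1; 0; 2; 0];
  [:: 1; 1; 0; 1; 1; 2; 0; 2; 0; 2; 0];
  [:: 2; 0; 1; 2; 2; 1; 0; 1; 0; 1; 0];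
  [:: 0; 1; 1; 2; 1; 2; 0; 2; 0; 1; 0];
  [:: 1; 2; 1; 1; 0; 0; 2; 2; 0; 1; 0];
  [:: 1; 2; 1; 0; 2; 0; 1; 1; 0; 2; 0];
  [:: 2; 1; 0; 1; 1; 0; 2; 2; 0; 1; 0];
  [:: 2; 0; 1; 1; 1; 0; 1; 1; 0; 1; 0];
  [:: 0; 2; 1; 1; 1; 0; 1; 1; 0; 1; 0];
  [:: 2; 1; 1; 0; 0; 1; 1; 2; 0; 2; 0];
  [:: 1; 1; 0; 2; 0; 1; 2; 1; 0; 2; 0];
  [:: 2; 0; 1; 1; 0; 1; 1; 2; 0; 2; 0];
  [:: 0; 2; 2; 1; 0; 1; 1; 1; 0; 2; 0];
  [:: 2; 1; 0; 0; 1; 1; 2; 2; 0; 1; 0];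
  [:: 1; 0; 2; 0; 1; 2; 2; 1; 0; 1; 0];
  [:: 0; 2; 1; 0; 2; 1; 2; 1; 0; 1; 0];
  [:: 1; 0; 0; 1; 1; 2; 1; 2; 0; 2; 0];
  [:: 0; 1; 0; 1; 2; 2; 2; 1; 0; 1; 0];
  [:: 0; 0; 1; 1; 1; 2; 1; 1; 0; 1; 0];
  [:: 1; 2; 2; 2; 1; 0; 0; 0; 1; 1; 0];
  [:: 2; 1; 2; 1; 0; 1; 0; 0; 2; 1; 0];
  [:: 2; 1; 2; 0; 1; 1; 0; 0; 2; 1; 0];
  [:: 1; 2; 0; 1; 2; 1; 0; 0; 2; 1; 0];
  [:: 1; 0; 1; 2; 1; 1; 0; 0; 2; 2; 0];
  [:: 0; 1; 1; 2; 1; 1; 0; 0; 2; 2; 0];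
  [:: 2; 1; 1; 2; 0; 0; 2; 0; 1; 1; 0];
  [:: 1; 1; 2; 0; 2; 0; 2; 0; 1; 1; 0];
  [:: 1; 1; 0; 2; 2; 0; 1; 0; 2; 1; 0];
  [:: 2; 0; 1; 2; 1; 0; 2; 0; 1; 1; 0];
  [:: 0; 1; 1; 2; 2; 0; 1; 0; 2; 1; 0];
  [:: 1; 2; 1; 0; 0; 2; 1; 0; 1; 2; 0];
  [:: 2; 2; 0; 1; 0; 2; 1; 0; 1; 1; 0];
  [:: 1; 0; 2; 1; 0; 1; 1; 0; 2; 2; 0];
  [:: 0; 1; 1; 1; 0; 1; 1; 0; 1; 2; 0];
  [:: 1; 2; 0; 0; 1; 1; 1; 0; 1; 1; 0];
  [:: 1; 0; 2; 0; 1; 1; 1; 0; 1; 1; 0];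
  [:: 0; 2; 1; 0; 2; 1; 2; 0; 1; 1; 0];
  [:: 1; 0; 0; 2; 1; 1; 1; 0; 1; 1; 0];
  [:: 0; 2; 0; 1; 1; 1; 2; 0; 1; 2; 0];
  [:: 0; 0; 2; 1; 2; 2; 1; 0; 1; 1; 0];
  [:: 1; 1; 2; 1; 0; 0; 0; 1; 1; 1; 0];
  [:: 1; 1; 1; 0; 2; 0; 0; 2; 2; 1; 0];
  [:: 1; 1; 0; 1; 2; 0; 0; 1; 1; 1; 0];
  [:: 2; 0; 2; 1; 1; 0; 0; 1; 1; 2; 0];
  [:: 0; 2; 1; 2; 2; 0; 0; 1; 1; 1; 0];
  [:: 1; 2; 1; 0; 0; 2; 0; 1; 1; 2; 0];
  [:: 1; 1; 0; 1; 0; 2; 0; 1; 1; 1; 0];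
  [:: 2; 0; 1; 1; 0; 2; 0; 1; 2; 1; 0];
  [:: 0; 1; 1; 2; 0; 2; 0; 2; 1; 1; 0];
  [:: 1; 1; 0; 0; 2; 1; 0; 2; 1; 2; 0];
  [:: 2; 0; 2; 0; 1; 1; 0; 1; 1; 2; 0];
  [:: 0; 2; 1; 0; 1; 2; 0; 1; 2; 1; 0];
  [:: 2; 0; 0; 2; 2; 1; 0; 1; 1; 1; 0];
  [:: 0; 2; 0; 1; 1; 2; 0; 1; 2; 1; 0];
  [:: 0; 0; 1; 2; 1; 1; 0; 1; 2; 2; 0];
  [:: 1; 2; 2; 0; 0; 0; 1; 2; 1; 1; 0];
  [:: 1; 1; 0; 1; 0; 0; 2; 1; 1; 1; 0];
  [:: 1; 0; 2; 1; 0; 0; 1; 1; 2; 2; 0];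
  [:: 0; 1; 1; 1; 0; 0; 2; 1; 2; 2; 0];
  [:: 1; 2; 0; 0; 2; 0; 1; 1; 1; 2; 0];
  [:: 1; 0; 1; 0; 2; 0; 1; 2; 2; 1; 0];
  [:: 0; 2; 2; 0; 1; 0; 1; 2; 1; 1; 0];
  [:: 1; 0; 0; 2; 1; 0; 2; 1; 2; 1; 0];
  [:: 0; 2; 0; 1; 1; 0; 2; 1; 1; 2; 0];
  [:: 0; 0; 1; 1; 1; 0; 1; 1; 2; 1; 0];
  [:: 1; 1; 0; 0; 0; 2; 1; 2; 2; 1; 0];
  [:: 2; 0; 1; 0; 0; 1; 1; 2; 1; 2; 0];
  [:: 0; 2; 2; 0; 0; 1; 1; 2; 1; 1; 0];
  [:: 1; 0; 0; 1; 0; 1; 2; 2; 2; 1; 0];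
  [:: 0; 1; 0; 2; 0; 2; 1; 1; 1; 2; 0];
  [:: 0; 0; 1; 1; 0; 1; 2; 2; 2; 1; 0];
  [:: 1; 0; 0; 0; 1; 1; 1; 2; 1; 1; 0];
  [:: 0; 2; 0; 0; 1; 2; 1; 1; 2; 1; 0];
  [:: 0; 0; 1; 0; 1; 2; 2; 2; 1; 1; 0];
  [:: 0; 0; 0; 2; 1; 2; 1; 1; 1; 2; 0];
  [:: 1; 2; 1; 1; 1; 2; 0; 0; 0; 0; 2];
  [:: 1; 1; 2; 1; 1; 0; 1; 0; 0; 0; 1];
  [:: 1; 2; 2; 1; 0; 1; 1; 0; 0; 0; 2];
  [:: 2; 1; 1; 0; 1; 2; 2; 0; 0; 0; 1];
  [:: 1; 1; 0; 1; 1; 2; 1; 0; 0; 0; 1];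
  [:: 1; 0; 1; 2; 2; 2; 1; 0; 0; 0; 1];
  [:: 0; 1; 2; 2; 2; 1; 1; 0; 0; 0; 1];
  [:: 2; 1; 1; 2; 1; 0; 0; 2; 0; 0; 1];
  [:: 1; 2; 1; 2; 0; 2; 0; 1; 0; 0; 1];
  [:: 1; 1; 1; 0; 1; 1; 0; 1; 0; 0; 2];
  [:: 2; 1; 0; 1; 1; 1; 0; 2; 0; 0; 2];
  [:: 1; 0; 2; 1; 2; 1; 0; 1; 0; 0; 2];
  [:: 0; 1; 2; 2; 2; 1; 0; 1; 0; 0; 1];
  [:: 1; 2; 1; 1; 0; 0; 2; 2; 0; 0; 1];
  [:: 1; 2; 2; 0; 1; 0; 2; 1; 0; 0; 1];
  [:: 1; 1; 0; 1; 1; 0; 1; 2; 0; 0; 1];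
  [:: 1; 0; 2; 1; 2; 0; 1; 1; 0; 0; 2];
  [:: 0; 1; 1; 1; 2; 0; 1; 2; 0; 0; 2];
  [:: 1; 2; 2; 0; 0; 1; 1; 1; 0; 0; 2];
  [:: 1; 2; 0; 2; 0; 2; 1; 1; 0; 0; 1];
  [:: 1; 0; 1; 2; 0; 1; 2; 1; 0; 0; 2];
  [:: 0; 1; 1; 2; 0; 1; 2; 1; 0; 0; 2];
  [:: 1; 1; 0; 0; 2; 1; 2; 2; 0; 0; 1];
  [:: 2; 0; 1; 0; 1; 2; 1; 1; 0; 0; 2];
  [:: 0; 1; 1; 0; 2; 1; 1; 2; 0; 0; 2];
  [:: 2; 0; 0; 1; 1; 2; 1; 1; 0; 0; 2];
  [:: 0; 2; 0; 2; 1; 1; 1; 2; 0; 0; 1];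
  [:: 0; 0; 1; 2; 1; 1; 2; 1; 0; 0; 2];
  [:: 2; 2; 2; 1; 1; 0; 0; 0; 1; 0; 1];
  [:: 2; 2; 2; 1; 0; 1; 0; 0; 1; 0; 1];
  [:: 1; 1; 2; 0; 1; 2; 0; 0; 2; 0; 1];
  [:: 1; 2; 0; 1; 2; 1; 0; 0; 2; 0; 1];
  [:: 1; 0; 2; 1; 1; 2; 0; 0; 2; 0; 1];
  [:: 0; 2; 1; 1; 1; 2; 0; 0; 1; 0; 2];
  [:: 1; 1; 1; 2; 0; 0; 1; 0; 2; 0; 2];
  [:: 2; 2; 1; 0; 1; 0; 1; 0; 2; 0; 1];
  [:: 1; 1; 0; 1; 1; 0; 1; 0; 2; 0; 1];
  [:: 1; 0; 1; 1; 2; 0; 2; 0; 2; 0; 1];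
  [:: 0; 1; 2; 2; 1; 0; 1; 0; 1; 0; 2];
  [:: 2; 1; 1; 0; 0; 2; 2; 0; 1; 0; 1];
  [:: 2; 1; 0; 2; 0; 1; 1; 0; 2; 0; 1];
  [:: 1; 0; 1; 1; 0; 2; 2; 0; 1; 0; 2];
  [:: 0; 1; 1; 1; 0; 1; 1; 0; 1; 0; 2];
  [:: 1; 1; 0; 0; 1; 1; 2; 0; 2; 0; 2];
  [:: 1; 0; 2; 0; 1; 2; 1; 0; 2; 0; 1];
  [:: 0; 1; 1; 0; 1; 1; 2; 0; 2; 0; 2];
  [:: 1; 0; 0; 1; 1; 2; 2; 0; 1; 0; 2];
  [:: 0; 2; 0; 1; 2; 2; 1; 0; 1; 0; 1];
  [:: 0; 0; 1; 1; 2; 1; 2; 0; 2; 0; 1];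
  [:: 2; 2; 2; 1; 0; 0; 0; 1; 1; 0; 1];
  [:: 1; 2; 1; 0; 1; 0; 0; 2; 1; 0; 2];
  [:: 1; 2; 0; 1; 1; 0; 0; 2; 1; 0; 2];
  [:: 2; 0; 1; 2; 1; 0; 0; 2; 1; 0; 1];
  [:: 0; 1; 2; 1; 1; 0; 0; 2; 2; 0; 1];
  [:: 1; 1; 2; 0; 0; 2; 0; 1; 1; 0; 2];
  [:: 1; 2; 0; 2; 0; 2; 0; 1; 1; 0; 1];
  [:: 1; 0; 2; 2; 0; 1; 0; 2; 1; 0; 1];
  [:: 0; 1; 2; 1; 0; 2; 0; 1; 1; 0; 2];
  [:: 2; 1; 0; 0; 2; 1; 0; 1; 2; 0; 1];
  [:: 2; 0; 1; 0; 2; 1; 0; 1; 1; 0; 2];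
  [:: 0; 2; 1; 0; 1; 1; 0; 2; 2; 0; 1];
  [:: 2; 0; 0; 1; 1; 1; 0; 1; 1; 0; 1];
  [:: 0; 2; 0; 1; 1; 1; 0; 1; 1; 0; 1];
  [:: 0; 0; 2; 1; 1; 1; 0; 1; 1; 0; 1];
  [:: 1; 2; 1; 0; 0; 0; 1; 1; 1; 0; 1];
  [:: 1; 1; 0; 2; 0; 0; 2; 2; 1; 0; 1];
  [:: 1; 0; 1; 2; 0; 0; 1; 1; 1; 0; 1];
  [:: 0; 2; 1; 1; 0; 0; 1; 1; 2; 0; 2];
  [:: 2; 1; 0; 0; 2; 0; 1; 1; 2; 0; 1];
  [:: 1; 0; 1; 0; 2; 0; 1; 1; 1; 0; 1];
  [:: 0; 1; 1; 0; 2; 0; 1; 2; 1; 0; 2];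
  [:: 1; 0; 0; 2; 1; 0; 2; 1; 2; 0; 1];
  [:: 0; 2; 0; 1; 1; 0; 1; 1; 2; 0; 2];
  [:: 0; 0; 2; 2; 1; 0; 1; 1; 1; 0; 2];
  [:: 2; 2; 0; 0; 0; 1; 2; 1; 1; 0; 1];
  [:: 1; 0; 1; 0; 0; 2; 1; 1; 1; 0; 1];
  [:: 0; 2; 1; 0; 0; 1; 1; 2; 2; 0; 1];
  [:: 2; 0; 0; 2; 0; 1; 1; 1; 2; 0; 1];
  [:: 0; 1; 0; 2; 0; 1; 2; 2; 1; 0; 1];
  [:: 0; 0; 2; 1; 0; 2; 1; 2; 1; 0; 1];
  [:: 1; 0; 0; 0; 2; 1; 2; 2; 1; 0; 1];
  [:: 0; 1; 0; 0; 1; 1; 2; 1; 2; 0; 2];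
  [:: 0; 0; 1; 0; 1; 2; 2; 2; 1; 0; 1];
  [:: 0; 0; 0; 1; 1; 1; 2; 1; 1; 0; 1];
  [:: 2; 1; 1; 1; 2; 0; 0; 0; 0; 2; 1];
  [:: 1; 2; 1; 1; 0; 1; 0; 0; 0; 1; 1];
  [:: 2; 2; 1; 0; 1; 1; 0; 0; 0; 2; 1];
  [:: 1; 1; 0; 1; 2; 2; 0; 0; 0; 1; 2];
  [:: 1; 0; 1; 1; 2; 1; 0; 0; 0; 1; 1];
  [:: 0; 1; 2; 2; 2; 1; 0; 0; 0; 1; 1];
  [:: 1; 1; 2; 1; 0; 0; 2; 0; 0; 1; 2];
  [:: 2; 1; 2; 0; 2; 0; 1; 0; 0; 1; 1];
  [:: 1; 1; 0; 1; 1; 0; 1; 0; 0; 2; 1];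
  [:: 1; 0; 1; 1; 1; 0; 2; 0; 0; 2; 2];
  [:: 0; 2; 1; 2; 1; 0; 1; 0; 0; 2; 1];
  [:: 2; 1; 1; 0; 0; 2; 2; 0; 0; 1; 1];
  [:: 2; 2; 0; 1; 0; 2; 1; 0; 0; 1; 1];
  [:: 1; 0; 1; 1; 0; 1; 2; 0; 0; 1; 1];
  [:: 0; 2; 1; 2; 0; 1; 1; 0; 0; 2; 1];
  [:: 2; 2; 0; 0; 1; 1; 1; 0; 0; 2; 1];
  [:: 2; 0; 2; 0; 2; 1; 1; 0; 0; 1; 1];
  [:: 0; 1; 2; 0; 1; 2; 1; 0; 0; 2; 1];
  [:: 1; 0; 0; 2; 1; 2; 2; 0; 0; 1; 1];
  [:: 0; 1; 0; 1; 2; 1; 1; 0; 0; 2; 2];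
  [:: 0; 0; 1; 1; 2; 1; 1; 0; 0; 2; 2];
  [:: 2; 2; 1; 1; 0; 0; 0; 1; 0; 1; 2];
  [:: 2; 2; 1; 0; 1; 0; 0; 1; 0; 1; 2];
  [:: 1; 2; 0; 1; 2; 0; 0; 2; 0; 1; 1];
  [:: 2; 0; 1; 2; 1; 0; 0; 2; 0; 1; 1];
  [:: 0; 2; 1; 1; 2; 0; 0; 2; 0; 1; 1];
  [:: 1; 1; 2; 0; 0; 1; 0; 2; 0; 2; 1];
  [:: 2; 1; 0; 1; 0; 1; 0; 2; 0; 1; 2];
  [:: 1; 0; 1; 1; 0; 1; 0; 2; 0; 1; 1];
  [:: 0; 1; 1; 2; 0; 2; 0; 2; 0; 1; 1];
  [:: 1; 1; 0; 0; 2; 2; 0; 1; 0; 1; 2];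
  [:: 1; 0; 2; 0; 1; 1; 0; 2; 0; 1; 2];
  [:: 0; 1; 1; 0; 2; 2; 0; 1; 0; 2; 1];
  [:: 1; 0; 0; 1; 1; 2; 0; 2; 0; 2; 1];
  [:: 0; 2; 0; 1; 2; 1; 0; 2; 0; 1; 1];
  [:: 0; 0; 1; 1; 2; 2; 0; 1; 0; 2; 1];
  [:: 2; 2; 1; 0; 0; 0; 1; 1; 0; 1; 2];
  [:: 2; 1; 0; 1; 0; 0; 2; 1; 0; 2; 1];
  [:: 2; 0; 1; 1; 0; 0; 2; 1; 0; 2; 1];
  [:: 0; 1; 2; 1; 0; 0; 2; 1; 0; 1; 2];
  [:: 1; 2; 0; 0; 2; 0; 1; 1; 0; 2; 1];
  [:: 2; 0; 2; 0; 2; 0; 1; 1; 0; 1; 1];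
  [:: 0; 2; 2; 0; 1; 0; 2; 1; 0; 1; 1];
  [:: 1; 0; 0; 2; 1; 0; 1; 2; 0; 1; 2];
  [:: 0; 1; 0; 2; 1; 0; 1; 1; 0; 2; 2];
  [:: 0; 0; 1; 1; 1; 0; 1; 1; 0; 1; 2];
  [:: 2; 1; 0; 0; 0; 1; 1; 1; 0; 1; 1];
  [:: 1; 0; 2; 0; 0; 2; 2; 1; 0; 1; 1];
  [:: 0; 1; 2; 0; 0; 1; 1; 1; 0; 1; 1];
  [:: 1; 0; 0; 2; 0; 1; 1; 2; 0; 1; 2];
  [:: 0; 1; 0; 2; 0; 1; 1; 1; 0; 1; 1];
  [:: 0; 0; 2; 1; 0; 2; 1; 2; 0; 1; 1];
  [:: 2; 0; 0; 0; 1; 2; 1; 1; 0; 1; 2];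
  [:: 0; 1; 0; 0; 2; 1; 1; 1; 0; 1; 1];
  [:: 0; 0; 2; 0; 1; 1; 1; 2; 0; 1; 2];
  [:: 0; 0; 0; 2; 1; 2; 2; 1; 0; 1; 1];
  [:: 1; 1; 1; 2; 0; 0; 0; 0; 2; 1; 2];
  [:: 2; 1; 1; 0; 1; 0; 0; 0; 1; 1; 1];
  [:: 2; 1; 0; 1; 1; 0; 0; 0; 2; 1; 2];
  [:: 1; 0; 1; 2; 2; 0; 0; 0; 1; 2; 1];
  [:: 0; 1; 1; 2; 1; 0; 0; 0; 1; 1; 1];
  [:: 1; 2; 1; 0; 0; 2; 0; 0; 1; 2; 1];
  [:: 1; 2; 0; 2; 0; 1; 0; 0; 1; 1; 2];
  [:: 1; 0; 1; 1; 0; 1; 0; 0; 2; 1; 1];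
  [:: 0; 1; 1; 1; 0; 2; 0; 0; 2; 2; 1];
  [:: 1; 1; 0; 0; 2; 2; 0; 0; 1; 1; 2];
  [:: 2; 0; 1; 0; 2; 1; 0; 0; 1; 1; 2];
  [:: 0; 1; 1; 0; 1; 2; 0; 0; 1; 1; 1];
  [:: 2; 0; 0; 1; 1; 1; 0; 0; 2; 1; 2];
  [:: 0; 2; 0; 2; 1; 1; 0; 0; 1; 1; 2];
  [:: 0; 0; 2; 1; 2; 2; 0; 0; 1; 1; 1];
  [:: 2; 1; 1; 0; 0; 0; 1; 0; 1; 2; 2];
  [:: 2; 1; 0; 1; 0; 0; 1; 0; 1; 2; 2];
  [:: 2; 0; 1; 2; 0; 0; 2; 0; 1; 1; 1];
  [:: 0; 1; 2; 1; 0; 0; 2; 0; 1; 1; 2];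
  [:: 1; 2; 0; 0; 1; 0; 2; 0; 2; 1; 1];
  [:: 1; 0; 1; 0; 1; 0; 2; 0; 1; 2; 2];
  [:: 0; 1; 1; 0; 1; 0; 2; 0; 1; 1; 1];
  [:: 1; 0; 0; 2; 2; 0; 1; 0; 1; 2; 1];
  [:: 0; 2; 0; 1; 1; 0; 2; 0; 1; 2; 1];
  [:: 0; 0; 1; 1; 2; 0; 2; 0; 2; 1; 1];
  [:: 2; 1; 0; 0; 0; 1; 1; 0; 1; 2; 2];
  [:: 1; 0; 1; 0; 0; 2; 1; 0; 2; 1; 2];
  [:: 0; 1; 1; 0; 0; 2; 1; 0; 2; 1; 2];
  [:: 2; 0; 0; 2; 0; 1; 1; 0; 2; 1; 1];
  [:: 0; 2; 0; 2; 0; 1; 1; 0; 1; 1; 2];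
  [:: 0; 0; 2; 1; 0; 1; 2; 0; 1; 2; 1];
  [:: 1; 0; 0; 0; 1; 1; 1; 0; 1; 1; 2];
  [:: 0; 2; 0; 0; 2; 2; 1; 0; 1; 1; 1];
  [:: 0; 0; 2; 0; 1; 1; 2; 0; 1; 2; 1];
  [:: 0; 0; 0; 1; 2; 1; 1; 0; 1; 2; 2];
  [:: 1; 1; 2; 0; 0; 0; 0; 2; 1; 2; 1];
  [:: 1; 1; 0; 1; 0; 0; 0; 1; 1; 1; 2];
  [:: 1; 0; 1; 1; 0; 0; 0; 2; 1; 2; 2];
  [:: 0; 1; 2; 2; 0; 0; 0; 1; 2; 1; 1];
  [:: 2; 1; 0; 0; 2; 0; 0; 1; 2; 1; 1];
  [:: 2; 0; 2; 0; 1; 0; 0; 1; 1; 2; 1];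
  [:: 0; 1; 1; 0; 1; 0; 0; 2; 1; 1; 1];
  [:: 1; 0; 0; 2; 2; 0; 0; 1; 1; 2; 1];
  [:: 0; 1; 0; 2; 1; 0; 0; 1; 1; 2; 2];
  [:: 0; 0; 1; 1; 1; 0; 0; 2; 1; 2; 2];
  [:: 1; 1; 0; 0; 0; 1; 0; 1; 2; 2; 2];
  [:: 1; 0; 1; 0; 0; 1; 0; 1; 2; 2; 2];
  [:: 0; 1; 2; 0; 0; 2; 0; 1; 1; 1; 2];
  [:: 2; 0; 0; 1; 0; 2; 0; 2; 1; 1; 1];
  [:: 0; 1; 0; 1; 0; 2; 0; 1; 2; 2; 1];
  [:: 0; 0; 2; 2; 0; 1; 0; 1; 2; 1; 1];
  [:: 1; 0; 0; 0; 1; 1; 0; 1; 2; 2; 2];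
  [:: 0; 1; 0; 0; 2; 1; 0; 2; 1; 2; 1];
  [:: 0; 0; 2; 0; 1; 1; 0; 2; 1; 1; 2];
  [:: 0; 0; 0; 1; 1; 1; 0; 1; 1; 2; 1];
  [:: 1; 2; 0; 0; 0; 0; 2; 1; 2; 1; 1];
  [:: 1; 0; 1; 0; 0; 0; 1; 1; 1; 2; 1];
  [:: 0; 1; 1; 0; 0; 0; 2; 1; 2; 2; 1];
  [:: 1; 0; 0; 2; 0; 0; 1; 2; 1; 1; 2];
  [:: 0; 2; 0; 1; 0; 0; 1; 1; 2; 1; 2];
  [:: 0; 0; 2; 2; 0; 0; 1; 1; 2; 1; 1];
  [:: 1; 0; 0; 0; 1; 0; 1; 2; 2; 2; 1];
  [:: 0; 1; 0; 0; 1; 0; 1; 2; 2; 2; 1];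
  [:: 0; 0; 1; 0; 2; 0; 2; 1; 1; 1; 2];
  [:: 0; 0; 0; 1; 1; 0; 1; 2; 2; 2; 1];
  [:: 2; 0; 0; 0; 0; 2; 1; 2; 1; 1; 1];
  [:: 0; 1; 0; 0; 0; 1; 1; 1; 2; 1; 1];
  [:: 0; 0; 2; 0; 0; 1; 2; 1; 1; 2; 1];
  [:: 0; 0; 0; 1; 0; 1; 2; 2; 2; 1; 1];
  [:: 0; 0; 0; 0; 2; 1; 2; 1; 1; 1; 2]].

Definition Bl : seq (seq nat) :=
 [:: [:: 0; 0; 0; 0; 0; 1; 1; 0; 1; 0; 0];
  [:: 0; 0; 0; 0; 1; 0; 1; 0; 1; 0; 0];
  [:: 0; 0; 0; 1; 0; 0; 1; 0; 0; 0; 1];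
  [:: 0; 0; 0; 0; 1; 1; 0; 0; 0; 1; 0];
  [:: 0; 0; 1; 0; 0; 1; 0; 0; 0; 0; 1];
  [:: 1; 0; 1; 0; 0; 0; 0; 0; 0; 1; 0];
  [:: 0; 0; 0; 0; 0; 1; 1; 1; 0; 0; 0];
  [:: 0; 0; 2; 0; 0; 2; 0; 0; 2; 0; 0];
  [:: 1; 0; 0; 0; 0; 1; 0; 1; 0; 0; 0];
  [:: 0; 0; 0; 0; 1; 0; 0; 1; 0; 1; 0];
  [:: 0; 0; 2; 2; 0; 0; 2; 0; 0; 0; 0];
  [:: 0; 1; 1; 0; 1; 0; 0; 0; 0; 0; 0];
  [:: 0; 0; 0; 0; 0; 0; 0; 2; 2; 0; 2];
  [:: 0; 0; 0; 0; 0; 0; 1; 0; 1; 0; 1];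
  [:: 0; 0; 0; 0; 0; 0; 2; 0; 0; 2; 2];
  [:: 0; 0; 1; 1; 0; 1; 0; 0; 0; 0; 0];
  [:: 0; 0; 1; 0; 1; 0; 0; 0; 0; 1; 0];
  [:: 0; 0; 0; 0; 2; 0; 2; 0; 0; 2; 0];
  [:: 0; 1; 0; 0; 0; 0; 1; 0; 0; 1; 0];
  [:: 0; 1; 0; 0; 0; 0; 1; 0; 1; 0; 0];
  [:: 0; 2; 2; 0; 0; 0; 0; 2; 0; 0; 0];
  [:: 0; 0; 0; 1; 0; 0; 0; 0; 1; 1; 0];
  [:: 0; 0; 2; 0; 2; 0; 2; 0; 0; 0; 0];
  [:: 0; 0; 2; 0; 2; 0; 0; 2; 0; 0; 0];
  [:: 0; 0; 0; 2; 0; 0; 0; 2; 0; 2; 0];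
  [:: 2; 0; 0; 0; 0; 0; 2; 0; 0; 0; 2];
  [:: 0; 0; 0; 2; 0; 2; 0; 0; 0; 2; 0];
  [:: 2; 0; 2; 2; 0; 0; 0; 0; 0; 0; 0];
  [:: 0; 0; 0; 0; 2; 2; 0; 0; 2; 0; 0];
  [:: 0; 1; 0; 0; 0; 0; 0; 1; 0; 1; 0];
  [:: 0; 0; 0; 0; 0; 0; 2; 2; 0; 0; 2];
  [:: 0; 0; 0; 2; 0; 0; 2; 0; 2; 0; 0];
  [:: 0; 0; 0; 1; 0; 1; 0; 1; 0; 0; 0];
  [:: 2; 0; 0; 0; 0; 0; 0; 2; 0; 2; 0];
  [:: 0; 1; 0; 0; 0; 0; 0; 0; 0; 1; 1];
  [:: 1; 0; 0; 1; 1; 0; 0; 0; 0; 0; 0];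
  [:: 1; 0; 1; 0; 0; 1; 0; 0; 0; 0; 0]].

Definition flipn (x : nat) : nat := match x with 1 => 2 | 2 => 1 | x => x end.
Definition Apl : seq (seq nat) := map (map flipn) Al.

Definition gt3 (x y z : nat) : bool :=
  match x, y, z with
  | 0,0,0 => false
  | 0,0,_ => true | 0,_,0 => true | _,0,0 => true
  | 0,1,2 => true | 0,2,1 => true | 1,0,2 => true | 2,0,1 => true | 1,2,0 => true | 2,1,0 => true
  | _,_,_ => false end.
Fixpoint ex3 (u v w : seq nat) : bool :=
  match u, v, w with x::u', y::v', z::w' => gt3 x y z || ex3 u' v' w' | _,_,_ => false end.
Fixpoint ex0 (u v : seq nat) : bool :=
  match u, v with x::u', y::v' => ((x == 0) && (y != 0)) || ex0 u' v' | _,_ => false end.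
Fixpoint tr2 (u : seq nat) (l : seq (seq nat)) : bool :=
  match l with v :: l' => all (ex3 u v) l' && tr2 u l' | [::] => true end.
Fixpoint tr3 (l : seq (seq nat)) : bool :=
  match l with u :: l' => tr2 u l' && tr3 l' | [::] => true end.
Definition wfL (L : seq (seq nat)) : bool :=
  all (fun r => (size r == 11) && all (fun x => x < 3) r) L.
Definition prs (L : seq (seq nat)) : bool :=
  all (fun u => all (fun v => (u == v) || ex0 u v) L) L.

Lemma chk_size : (size Al == 330) && (size Bl == 37).
Proof. by vm_compute. Qed.
Lemma chk_wf : [&& wfL Al, wfL Apl & wfL Bl].
Proof. by vm_compute. Qed.
Lemma chk_uniq : [&& uniq Al, uniq Apl & uniq Bl].
Proof. by vm_compute. Qed.
Lemma chk_wt : [&& all (fun r => count (fun x => x != 0) r == 7) Al,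
   all (fun r => count (fun x => x != 0) r == 7) Apl &
   all (fun r => count (fun x => x != 0) r == 3) Bl].
Proof. by vm_compute. Qed.
Lemma chk_trA : tr3 Al. Proof. by vm_compute. Qed.
Lemma chk_trAp : tr3 Apl. Proof. by vm_compute. Qed.
Lemma chk_trB : tr3 Bl. Proof. by vm_compute. Qed.
Lemma chk_prs : [&& prs Al, prs Apl & prs Bl]. Proof. by vm_compute. Qed.
Lemma chk_ii : all (fun b1 => all (fun b2 => all (fun a => ex3 b1 b2 a) (Al ++ Apl)) Bl) Bl.
Proof. by vm_compute. Qed.
Lemma chk_iii : all (fun u => all (fun b => all (fun v => ex3 u b v) Al) Bl) Apl.
Proof. by vm_compute. Qed.
Lemma chk_c1 : all (fun b => all (fun a => ex0 b a) (Al ++ Apl)) Bl.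
Proof. by vm_compute. Qed.

Definition bv := {ffun 'I_11 -> 'I_3}.
Definition vecof (L : seq (seq nat)) (a : nat) : bv :=
  [ffun k : 'I_11 => inord (nth 0 (nth [::] L a) k)].
Definition gtb (u v w : bv) : Prop := exists k, good_triple (u k) (v k) (w k).

Lemma wfL_row L a : wfL L -> a < size L ->
  size (nth [::] L a) = 11 /\ all (fun x => x < 3) (nth [::] L a).
Proof. by move=> /allP H Ha; have /H/andP[/eqP -> ->] := mem_nth [::] Ha. Qed.

Lemma vecofE L a (k : 'I_11) : wfL L -> a < size L ->
  val (vecof L a k) = nth 0 (nth [::] L a) k.
Proof.
move=> wf Ha; have [Hs /allP Hall] := wfL_row wf Ha.
rewrite ffunE; apply: inordK; apply: Hall; apply: mem_nth; by rewrite Hs.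
Qed.

Lemma gtn_good (a b c : 'I_3) : gt3 a b c -> good_triple a b c.
Proof.
case: a => [[|[|[|?]]] Ha] //; case: b => [[|[|[|?]]] Hb] //;
case: c => [[|[|[|?]]] Hc] //= _; rewrite /good_triple;
first [ by left | by right; left | by right; right ].
Qed.

Lemma ex3P u v w : ex3 u v w ->
  exists2 k, k < size u & gt3 (nth 0 u k) (nth 0 v k) (nth 0 w k).
Proof.
elim: u v w => [|x u IH] [|y v] [|z w] //= /orP [H|/IH [k Hk H]].
- by exists 0.
- by exists k.+1.
Qed.

Lemma ex0P u v : ex0 u v ->
  exists2 k, k < size u & (nth 0 u k == 0) && (nth 0 v k != 0).
Proof.
elim: u v => [|x u IH] [|y v] //= /orP [H|/IH [k Hk H]].
- by exists 0.
- by exists k.+1.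
Qed.

Lemma ex3_gtb L1 L2 L3 a b c : wfL L1 -> wfL L2 -> wfL L3 ->
  a < size L1 -> b < size L2 -> c < size L3 ->
  ex3 (nth [::] L1 a) (nth [::] L2 b) (nth [::] L3 c) ->
  gtb (vecof L1 a) (vecof L2 b) (vecof L3 c).
Proof.
move=> w1 w2 w3 ha hb hc /ex3P [k hk hg].
have [s1 _] := wfL_row w1 ha; rewrite s1 in hk.
exists (Ordinal hk); apply: gtn_good; by rewrite !vecofE.
Qed.

Lemma ex0_c1 L1 L2 a b : wfL L1 -> wfL L2 -> a < size L1 -> b < size L2 ->
  ex0 (nth [::] L1 a) (nth [::] L2 b) ->
  exists k, vecof L1 a k = z0 /\ vecof L2 b k <> z0.
Proof.
move=> w1 w2 ha hb /ex0P [k hk /andP [h1 h2]].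
have [s1 _] := wfL_row w1 ha; rewrite s1 in hk.
exists (Ordinal hk); split.
- apply: val_inj; rewrite vecofE //; exact/eqP.
- move/(congr1 val); rewrite vecofE //= => E; by rewrite E in h2.
Qed.

Lemma vecof_row L a b : nth [::] L a = nth [::] L b -> vecof L a = vecof L b.
Proof. by move=> E; apply/ffunP => k; rewrite !ffunE E. Qed.

Lemma vecof_inj L a b : wfL L -> uniq L -> a < size L -> b < size L ->
  vecof L a = vecof L b -> a = b.
Proof.
move=> wf u ha hb E.
have [sa _] := wfL_row wf ha; have [sb _] := wfL_row wf hb.
have : nth [::] L a = nth [::] L b.
  apply: (@eq_from_nth _ 0); first by rewrite sa sb.
  move=> k; rewrite sa => hk.
  have := congr1 (fun f : bv => val (f (Ordinal hk))) E.
  by rewrite /= !vecofE.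
by move/eqP; rewrite nth_uniq // => /eqP.
Qed.

Lemma tr2_nth u l j k : tr2 u l -> j < k -> k < size l ->
  ex3 u (nth [::] l j) (nth [::] l k).
Proof.
elim: l j k => [|v l IH] j k //= /andP [/allP H1 H2].
case: j => [|j]; case: k => [|k] //= hjk hk.
- apply: H1; exact: mem_nth.
- exact: IH.
Qed.

Lemma tr3_nth l i j k : tr3 l -> i < j -> j < k -> k < size l ->
  ex3 (nth [::] l i) (nth [::] l j) (nth [::] l k).
Proof.
elim: l i j k => [|u l IH] i j k //= /andP [H1 H2].
case: i => [|i]; case: j => [|j]; case: k => [|k] //= hij hjk hk.
- exact: tr2_nth.
- exact: IH.
Qed.

Lemma perm3_12 (T : eqType) (a b c : T) : perm_eq [:: b; a; c] [:: a; b; c].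
Proof. by apply/permP => q /=; rewrite addnCA. Qed.
Lemma perm3_23 (T : eqType) (a b c : T) : perm_eq [:: a; c; b] [:: a; b; c].
Proof. by apply/permP => q /=; rewrite !addn0 [q c + _]addnC. Qed.

Lemma good12 a b c : good_triple a b c -> good_triple b a c.
Proof.
by case=> [H|[H|H]]; [left|right;left|right;right]; exact: perm_trans (perm3_12 _ _ _) H.
Qed.
Lemma good23 a b c : good_triple a b c -> good_triple a c b.
Proof.
by case=> [H|[H|H]]; [left|right;left|right;right]; exact: perm_trans (perm3_23 _ _ _) H.
Qed.
Lemma gtb12 u v w : gtb u v w -> gtb v u w.
Proof. by case=> k H; exists k; apply: good12. Qed.
Lemma gtb23 u v w : gtb u v w -> gtb u w v.
Proof. by case=> k H; exists k; apply: good23. Qed.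

Lemma good00 (x : 'I_3) : x <> z0 -> good_triple z0 z0 x.
Proof.
case: x => [[|[|[|?]]] H] // Hx.
- by case: Hx; apply: val_inj.
- by right; left.
- by right; right.
Qed.

Lemma sym3 (P : nat -> nat -> nat -> Prop) :
  (forall a b c, P a b c -> P b a c) -> (forall a b c, P a b c -> P a c b) ->
  (forall a b c, a < b -> b < c -> P a b c) ->
  forall a b c, a != b -> b != c -> a != c -> P a b c.
Proof.
move=> s12 s23 H a b c; case: (ltngtP a b) => // hab;
case: (ltngtP b c) => // hbc; case: (ltngtP a c) => // hac _ _ _;
solve [ (apply H; lia) | (apply s23; apply H; lia)
      | (apply s23; apply s12; apply H; lia) | (apply s12; apply H; lia)
      | (apply s12; apply s23; apply H; lia)
      | (apply s12; apply s23; apply s12; apply H; lia) | lia ].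
Qed.

Lemma set_c1 L a b : wfL L -> prs L -> a < size L -> b < size L ->
  vecof L a <> vecof L b -> exists k, vecof L a k = z0 /\ vecof L b k <> z0.
Proof.
move=> wf /allP pr ha hb neq.
have /allP := pr _ (mem_nth [::] ha) => /(_ _ (mem_nth [::] hb)) /orP [/eqP E|H].
- by case: neq; apply: vecof_row.
- exact: ex0_c1.
Qed.

Lemma set_i L a b c : wfL L -> uniq L -> tr3 L -> prs L ->
  a < size L -> b < size L -> c < size L ->
  ~ (vecof L a = vecof L b /\ vecof L b = vecof L c) ->
  gtb (vecof L a) (vecof L b) (vecof L c).
Proof.
move=> wf u tr pr ha hb hc nall.
have pair x y : x < size L -> y < size L -> vecof L x <> vecof L y ->
    gtb (vecof L x) (vecof L x) (vecof L y).
  move=> hx hy nxy; have [k [h1 h2]] := set_c1 wf pr hx hy nxy.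
  by exists k; rewrite h1; apply: good00.
have inj := @vecof_inj L _ _ wf u.
case: (eqVneq (vecof L a) (vecof L b)) => [eab|nab].
  have nbc : vecof L b <> vecof L c by move=> e; apply: nall.
  by rewrite eab; apply: pair.
case: (eqVneq (vecof L b) (vecof L c)) => [ebc|nbc].
  rewrite ebc; apply: gtb12; apply: gtb23; apply: pair => // e; move: nab; by rewrite ebc e eqxx.
case: (eqVneq (vecof L a) (vecof L c)) => [eac|nac].
  rewrite eac; apply: gtb23; apply: pair => // e; move: nbc; by rewrite e eqxx.
have nab' : a != b by apply/eqP => e; move: nab; rewrite e eqxx.
have nbc' : b != c by apply/eqP => e; move: nbc; rewrite e eqxx.
have nac' : a != c by apply/eqP => e; move: nac; rewrite e eqxx.
move: a b c nab' nbc' nac' ha hb hc {nall nab nbc nac}.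
apply: (sym3 (P := fun a b c => a < size L -> b < size L -> c < size L ->
                  gtb (vecof L a) (vecof L b) (vecof L c))).
- by move=> a b c H ha hb hc; apply: gtb12; apply: H.
- by move=> a b c H ha hb hc; apply: gtb23; apply: H.
- move=> a b c hab hbc ha hb hc; apply: ex3_gtb => //; exact: tr3_nth.
Qed.

Lemma count_sumord (r : seq nat) (P : pred nat) :
  count P r = \sum_(k < size r) P (nth 0 r k).
Proof.
elim: r => [|x r IH]; first by rewrite big_ord0.
by rewrite /= big_ord_recl IH.
Qed.

Lemma wt_vecof L a n : wfL L -> a < size L ->
  count (fun x => x != 0) (nth [::] L a) = n ->
  \sum_(k < 11) (vecof L a k != z0) = n.
Proof.
move=> wf ha <-; have [s _] := wfL_row wf ha.
have E k : val (vecof L a k) = nth 0 (nth [::] L a) k by exact: vecofE.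
rewrite count_sumord s; apply: eq_bigr => k _; by rewrite -val_eqE E.
Qed.

Lemma sizeA : size Al = 330. Proof. by case/andP: chk_size => /eqP. Qed.
Lemma sizeAp : size Apl = 330. Proof. by rewrite size_map sizeA. Qed.
Lemma sizeB : size Bl = 37. Proof. by case/andP: chk_size => _ /eqP. Qed.
Lemma wfA : wfL Al. Proof. by case/and3P: chk_wf. Qed.
Lemma wfAp : wfL Apl. Proof. by case/and3P: chk_wf. Qed.
Lemma wfB : wfL Bl. Proof. by case/and3P: chk_wf. Qed.

Definition Av (a : 'I_330) : bv := vecof Al a.
Definition Apv (a : 'I_330) : bv := vecof Apl a.
Definition Bv (j : 'I_37) : bv := vecof Bl j.

Lemma ltA (a : 'I_330) : a < size Al. Proof. by rewrite sizeA. Qed.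
Lemma ltAp (a : 'I_330) : a < size Apl. Proof. by rewrite sizeAp. Qed.
Lemma ltB (j : 'I_37) : j < size Bl. Proof. by rewrite sizeB. Qed.

Lemma Av_inj : injective Av.
Proof.
move=> a b E; apply: val_inj; apply: (vecof_inj wfA _ (ltA a) (ltA b) E).
by case/and3P: chk_uniq.
Qed.
Lemma Apv_inj : injective Apv.
Proof.
move=> a b E; apply: val_inj; apply: (vecof_inj wfAp _ (ltAp a) (ltAp b) E).
by case/and3P: chk_uniq.
Qed.
Lemma Bv_inj : injective Bv.
Proof.
move=> a b E; apply: val_inj; apply: (vecof_inj wfB _ (ltB a) (ltB b) E).
by case/and3P: chk_uniq.
Qed.

Definition SameSet (u v : bv) : Prop :=
  (exists j j', u = Bv j /\ v = Bv j') \/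
  (exists a b, u = Av a /\ v = Av b) \/ (exists a b, u = Apv a /\ v = Apv b).

Lemma SameSet_c1 u v : SameSet u v -> u <> v -> exists k, u k = z0 /\ v k <> z0.
Proof.
case=> [[j [j' [-> ->]]]|[[a [b [-> ->]]]|[a [b [-> ->]]]]] neq.
- apply: (set_c1 wfB _ (ltB j) (ltB j') neq); by case/and3P: chk_prs.
- apply: (set_c1 wfA _ (ltA a) (ltA b) neq); by case/and3P: chk_prs.
- apply: (set_c1 wfAp _ (ltAp a) (ltAp b) neq); by case/and3P: chk_prs.
Qed.

Definition SameSet3 (u v w : bv) : Prop :=
  (exists j j' j'', [/\ u = Bv j, v = Bv j' & w = Bv j'']) \/
  (exists a b c, [/\ u = Av a, v = Av b & w = Av c]) \/
  (exists a b c, [/\ u = Apv a, v = Apv b & w = Apv c]).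

Lemma SameSet3_i u v w : SameSet3 u v w -> ~ (u = v /\ v = w) -> gtb u v w.
Proof.
case=> [[j [j' [j'' [-> -> ->]]]]|[[a [b [c [-> -> ->]]]]|[a [b [c [-> -> ->]]]]]] nall.
- apply: (set_i wfB _ chk_trB _ (ltB j) (ltB j') (ltB j'') nall);
    [by case/and3P: chk_uniq | by case/and3P: chk_prs].
- apply: (set_i wfA _ chk_trA _ (ltA a) (ltA b) (ltA c) nall);
    [by case/and3P: chk_uniq | by case/and3P: chk_prs].
- apply: (set_i wfAp _ chk_trAp _ (ltAp a) (ltAp b) (ltAp c) nall);
    [by case/and3P: chk_uniq | by case/and3P: chk_prs].
Qed.

Lemma B_ii j1 j2 u : ((exists a, u = Av a) \/ (exists a, u = Apv a)) ->
  gtb (Bv j1) (Bv j2) u.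
Proof.
have H := allP chk_ii _ (mem_nth [::] (ltB j1)).
have {}H := allP H _ (mem_nth [::] (ltB j2)).
case=> [[a ->]|[a ->]].
- apply: ex3_gtb; try exact: ltA; try exact: ltB; try exact: wfA; try exact: wfB.
  apply: (allP H); rewrite mem_cat; apply/orP; left; exact: mem_nth (ltA a).
- apply: ex3_gtb; try exact: ltAp; try exact: ltB; try exact: wfAp; try exact: wfB.
  apply: (allP H); rewrite mem_cat; apply/orP; right; exact: mem_nth (ltAp a).
Qed.

Lemma B_iii a j b : gtb (Apv a) (Bv j) (Av b).
Proof.
apply: ex3_gtb; try exact: ltA; try exact: ltAp; try exact: ltB;
  try exact: wfA; try exact: wfAp; try exact: wfB.
have H := allP chk_iii _ (mem_nth [::] (ltAp a)).
have {}H := allP H _ (mem_nth [::] (ltB j)).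
exact: (allP H _ (mem_nth [::] (ltA b))).
Qed.

Lemma B_c1 j u : ((exists a, u = Av a) \/ (exists a, u = Apv a)) ->
  exists k, Bv j k = z0 /\ u k <> z0.
Proof.
have H := allP chk_c1 _ (mem_nth [::] (ltB j)).
case=> [[a ->]|[a ->]].
- apply: ex0_c1; try exact: ltA; try exact: ltB; try exact: wfA; try exact: wfB.
  apply: (allP H); rewrite mem_cat; apply/orP; left; exact: mem_nth (ltA a).
- apply: ex0_c1; try exact: ltAp; try exact: ltB; try exact: wfAp; try exact: wfB.
  apply: (allP H); rewrite mem_cat; apply/orP; right; exact: mem_nth (ltAp a).
Qed.

Lemma wtA a : \sum_(k < 11) (Av a k != z0) = 7.
Proof.
apply: wt_vecof; [exact: wfA | exact: ltA |].
case/and3P: chk_wt => /allP H _ _; apply/eqP; apply: H; exact: mem_nth (ltA a).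
Qed.
Lemma wtAp a : \sum_(k < 11) (Apv a k != z0) = 7.
Proof.
apply: wt_vecof; [exact: wfAp | exact: ltAp |].
case/and3P: chk_wt => _ /allP H _; apply/eqP; apply: H; exact: mem_nth (ltAp a).
Qed.
Lemma wtB j : \sum_(k < 11) (Bv j k != z0) = 3.
Proof.
apply: wt_vecof; [exact: wfB | exact: ltB |].
case/and3P: chk_wt => _ _ /allP H; apply/eqP; apply: H; exact: mem_nth (ltB j).
Qed.

Lemma blk_proof (i : 'I_1562) : i %/ 11 < 142.
Proof. by rewrite ltn_divLR //; exact: ltn_ord i. Qed.
Definition blk (i : 'I_1562) : 'I_142 := Ordinal (blk_proof i).
Definition off (i : 'I_1562) : 'I_11 := Ordinal (ltn_pmod i (isT : 0 < 11)).
Lemma idx_proof (c : 'I_142) (k : 'I_11) : c * 11 + k < 1562.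
Proof. have := ltn_ord c; have := ltn_ord k; lia. Qed.
Definition idx (c : 'I_142) (k : 'I_11) : 'I_1562 := Ordinal (idx_proof c k).

Lemma blk_idx c k : blk (idx c k) = c.
Proof. apply: val_inj => /=; by rewrite divnMDl // divn_small // addn0. Qed.
Lemma off_idx c k : off (idx c k) = k.
Proof. apply: val_inj => /=; by rewrite modnMDl modn_small. Qed.
Lemma idx_blk i : idx (blk i) (off i) = i.
Proof. apply: val_inj => /=; by rewrite -divn_eq. Qed.

Definition TT := ('I_142 * 'I_37 * {ffun 'I_141 -> 'I_330})%type.

Definition bl (t : TT) (c : 'I_142) : bv :=
  match unlift t.1.1 c with
  | None => Bv t.1.2
  | Some c' => if c < t.1.1 then Av (t.2 c') else Apv (t.2 c')
  end.

Definition big (t : TT) : vec 1562 := [ffun i => bl t (blk i) (off i)].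

Lemma bigE t c k : big t (idx c k) = bl t c k.
Proof. by rewrite ffunE blk_idx off_idx. Qed.

Lemma bl_p (t : TT) : bl t t.1.1 = Bv t.1.2.
Proof. by rewrite /bl unlift_none. Qed.
Lemma bl_lt (t : TT) (c : 'I_142) : c < t.1.1 -> exists a, bl t c = Av a.
Proof.
rewrite /bl; case: unliftP => [c' ->|->]; last by rewrite ltnn.
by move=> ->; exists (t.2 c').
Qed.
Lemma bl_gt (t : TT) (c : 'I_142) : t.1.1 < c -> exists a, bl t c = Apv a.
Proof.
rewrite /bl; case: unliftP => [c' ->|->]; last by rewrite ltnn.
move=> H; have -> : (lift t.1.1 c' < t.1.1) = false.
  by apply/negbTE; rewrite -leqNgt ltnW.
by exists (t.2 c').
Qed.
Lemma bl_ne (t : TT) (c : 'I_142) : c != t.1.1 -> (exists a, bl t c = Av a) \/ (exists a, bl t c = Apv a).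
Proof.
move=> H; case: (ltngtP c t.1.1) => h.
- by left; apply: bl_lt.
- by right; apply: bl_gt.
- by move: H; rewrite (val_inj h) eqxx.
Qed.

Lemma same2 (t1 t2 : TT) (c : 'I_142) : t1.1.1 = t2.1.1 -> SameSet (bl t1 c) (bl t2 c).
Proof.
move=> e; case: (ltngtP c t1.1.1) => h.
- have [a ->] := bl_lt h; rewrite e in h; have [b ->] := bl_lt h.
  by right; left; exists a, b.
- have [a ->] := bl_gt h; rewrite e in h; have [b ->] := bl_gt h.
  by right; right; exists a, b.
- have hc := val_inj h; rewrite hc (bl_p t1) e (bl_p t2).
  by left; exists t1.1.2, t2.1.2.
Qed.

Lemma same3 (t1 t2 t3 : TT) (c : 'I_142) : t1.1.1 = t2.1.1 -> t2.1.1 = t3.1.1 ->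
  SameSet3 (bl t1 c) (bl t2 c) (bl t3 c).
Proof.
move=> e e'; case: (ltngtP c t1.1.1) => h.
- have [a ->] := bl_lt h; rewrite e in h; have [b ->] := bl_lt h;
  rewrite e' in h; have [d ->] := bl_lt h.
  by right; left; exists a, b, d.
- have [a ->] := bl_gt h; rewrite e in h; have [b ->] := bl_gt h;
  rewrite e' in h; have [d ->] := bl_gt h.
  by right; right; exists a, b, d.
- have hc := val_inj h; rewrite hc (bl_p t1) e (bl_p t2) e' (bl_p t3).
  by left; exists t1.1.2, t2.1.2, t3.1.2.
Qed.

Lemma big_diff (t1 t2 : TT) : big t1 <> big t2 -> exists c, bl t1 c <> bl t2 c.
Proof.
move=> neq; case: (boolP [exists c, bl t1 c != bl t2 c]).
- by case/existsP => c /eqP; exists c.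
- move/existsPn => H; case: neq; apply/ffunP => i.
  rewrite -(idx_blk i) !bigE; by have /negPn/eqP -> := H (blk i).
Qed.

Lemma cond1_big (t1 t2 : TT) : big t1 <> big t2 -> cond1 (big t1) (big t2).
Proof.
move=> neq.
have lift1 c : (exists k, bl t1 c k = z0 /\ bl t2 c k <> z0) ->
    exists i, big t1 i = z0 /\ big t2 i <> z0.
  by case=> k h; exists (idx c k); rewrite !bigE.
have lift2 c : (exists k, bl t1 c k <> z0 /\ bl t2 c k = z0) ->
    exists i, big t1 i <> z0 /\ big t2 i = z0.
  by case=> k h; exists (idx c k); rewrite !bigE.
case: (ltngtP t1.1.1 t2.1.1) => h.
- split.
  + apply: (lift1 t1.1.1); rewrite (bl_p t1); apply: B_c1; left; exact: bl_lt.
  + apply: (lift2 t2.1.1); rewrite (bl_p t2).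
    have [k [h1 h2]] := B_c1 t2.1.2 (or_intror (bl_gt h)); by exists k.
- split.
  + apply: (lift1 t1.1.1); rewrite (bl_p t1); apply: B_c1; right; exact: bl_gt.
  + apply: (lift2 t2.1.1); rewrite (bl_p t2).
    have [k [h1 h2]] := B_c1 t2.1.2 (or_introl (bl_lt h)); by exists k.
- have e := val_inj h.
  have [c nc] := big_diff neq.
  split.
  + apply: (lift1 c); apply: SameSet_c1 => //; exact: same2.
  + apply: (lift2 c).
    have [k [h1 h2]] := SameSet_c1 (same2 c (esym e)) (fun x => nc (esym x)).
    by exists k.
Qed.

Definition Q (t1 t2 t3 : TT) : Prop := exists c, gtb (bl t1 c) (bl t2 c) (bl t3 c).

Lemma Q12 (t1 t2 t3 : TT) : Q t1 t2 t3 -> Q t2 t1 t3.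
Proof. by case=> c h; exists c; apply: gtb12. Qed.
Lemma Q23 (t1 t2 t3 : TT) : Q t1 t2 t3 -> Q t1 t3 t2.
Proof. by case=> c h; exists c; apply: gtb23. Qed.

Lemma Q_same (t1 t2 t3 : TT) : t1.1.1 = t2.1.1 -> t2.1.1 = t3.1.1 ->
  big t1 <> big t2 -> Q t1 t2 t3.
Proof.
move=> e e' neq; have [c nc] := big_diff neq.
exists c; apply: SameSet3_i; first exact: same3.
by case.
Qed.

Lemma Q_two (t1 t2 t3 : TT) : t1.1.1 = t2.1.1 -> t3.1.1 != t1.1.1 -> Q t1 t2 t3.
Proof.
move=> e ne; exists t1.1.1; rewrite (bl_p t1) e (bl_p t2).
by apply: B_ii; apply: bl_ne; rewrite -e eq_sym.
Qed.

Lemma Q_mid (t1 t2 t3 : TT) : t1.1.1 < t2.1.1 -> t2.1.1 < t3.1.1 -> Q t1 t2 t3.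
Proof.
move=> h1 h2; exists t2.1.1; rewrite (bl_p t2).
have [a ->] := bl_gt h1; have [b ->] := bl_lt h2.
exact: B_iii.
Qed.

Lemma Q_all (t1 t2 t3 : TT) : big t1 <> big t2 -> big t2 <> big t3 -> big t1 <> big t3 ->
  Q t1 t2 t3.
Proof.
move=> n12 n23 n13.
case: (eqVneq t1.1.1 t2.1.1) => e12; case: (eqVneq t2.1.1 t3.1.1) => e23.
- exact: Q_same.
- apply: Q_two; first exact: e12.
  apply/eqP => E; move: e23; by rewrite -e12 E eqxx.
- apply: Q12; apply: Q23; exact: Q_two e23 e12.
case: (eqVneq t1.1.1 t3.1.1) => e13.
- apply: Q23; apply: Q_two; [exact: e13 | by rewrite eq_sym].
have key : forall a b c : nat, a != b -> b != c -> a != c ->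
    forall s1 s2 s3 : TT, val s1.1.1 = a -> val s2.1.1 = b -> val s3.1.1 = c -> Q s1 s2 s3.
  apply: (sym3 (P := fun a b c => forall s1 s2 s3 : TT, val s1.1.1 = a ->
     val s2.1.1 = b -> val s3.1.1 = c -> Q s1 s2 s3)).
  - by move=> a b c H s1 s2 s3 h1 h2 h3; apply: Q12; apply: H.
  - by move=> a b c H s1 s2 s3 h1 h2 h3; apply: Q23; apply: H.
  - move=> a b c hab hbc s1 s2 s3 h1 h2 h3; apply: Q_mid.
    + by rewrite h1 h2.
    + by rewrite h2 h3.
by apply: (key t1.1.1 t2.1.1 t3.1.1).
Qed.

Definition Tset : {set vec 1562} := [set big t | t : TT].

Lemma Tset_adm : admissible Tset.
Proof.
split.
- move=> s s' /imsetP [t1 _ ->] /imsetP [t2 _ ->] neq; exact: cond1_big.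
- move=> s s' s'' /imsetP [t1 _ ->] /imsetP [t2 _ ->] /imsetP [t3 _ ->] n12 n13 n23.
  have [c [k h]] := Q_all n12 n23 n13.
  by exists (idx c k); rewrite !bigE.
Qed.

Lemma big_inj : injective big.
Proof.
move=> [[p1 j1] f1] [[p2 j2] f2] E.
have eb c : bl ((p1, j1), f1) c = bl ((p2, j2), f2) c.
  apply/ffunP => k; by rewrite -!bigE E.
have ep : p1 = p2.
  case: (ltngtP p1 p2) => h; last exact: val_inj.
  - have := eb p1; rewrite (bl_p ((p1, j1), f1)) => e.
    have [k [h1 h2]] := B_c1 j1 (or_introl (bl_lt (t := ((p2, j2), f2)) h)).
    by case: h2; rewrite -e.
  - have := eb p2; rewrite (bl_p ((p2, j2), f2)) => e.
    have [k [h1 h2]] := B_c1 j2 (or_introl (bl_lt (t := ((p1, j1), f1)) h)).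
    by case: h2; rewrite e.
subst p2.
have ej : j1 = j2.
  have := eb p1; rewrite (bl_p ((p1, j1), f1)) (bl_p ((p1, j2), f2)); exact: Bv_inj.
subst j2.
congr (_, _); apply/ffunP => c'.
have := eb (lift p1 c'); rewrite /bl /= liftK.
by case: ifP => _; [move/Av_inj | move/Apv_inj].
Qed.

Lemma card_Tset : #|Tset| = 142 * 37 * 330 ^ 141.
Proof.
rewrite /Tset card_imset; last exact: big_inj.
by rewrite !card_prod card_ffun !card_ord.
Qed.

Lemma weight_big t : weight (big t) = 990.
Proof.
rewrite /weight -sum1dep_card big_mkcond /=.
rewrite (reindex (fun ck : 'I_142 * 'I_11 => idx ck.1 ck.2)) /=; last first.
  exists (fun i => (blk i, off i)) => [[c k] _|i _] /=.
  - by rewrite blk_idx off_idx.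
  - exact: idx_blk.
rewrite -(pair_bigA _ (fun c k => if big t (idx c k) != z0 then 1 else 0)) /=.
have blkw c : \sum_(k < 11) (if big t (idx c k) != z0 then 1 else 0) =
    (if c == t.1.1 then 3 else 7).
  rewrite (eq_bigr (fun k => nat_of_bool (bl t c k != z0))); last first.
    by move=> k _; rewrite bigE; case: (_ != _).
  case: eqP => [->|/eqP ne]; first by rewrite bl_p wtB.
  by case: (bl_ne ne) => [[a ->]|[a ->]]; [exact: wtA | exact: wtAp].
rewrite (eq_bigr _ (fun c _ => blkw c)).
rewrite (bigD1 t.1.1) //= eqxx.
rewrite (eq_bigr (fun _ => 7)); last by move=> c /negbTE ->.
by rewrite sum_nat_const cardC1 card_ord.
Qed.

Lemma bin_11_7 : 'C(11, 7) = 330.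
Proof. by []. Qed.

Theorem lemma3p8 :
  exists T' : {set vec 1562},
    admissible T' /\
    #|T'| = 142 * 37 * 'C(11, 7) ^ 141 /\
    (forall t, t \in T' -> weight t = 990).
Proof.
exists Tset; split; first exact: Tset_adm.
split; first by rewrite bin_11_7; exact: card_Tset.
by move=> s /imsetP [t _ ->]; exact: weight_big.
Qed.
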